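(* Let $F$ be a complete nonarchimedean field with ring of integers $\mathbf{o}_F$ and maximal ideal $m_F$, and let $A$ be an $n\times n$ matrix over $F$. Let $\lambda_1,\dots,\lambda_n$ be the eigenvalues of $A$, ordered so that $|\lambda_1|\ge\dots\ge|\lambda_n|$, and let $\sigma_1\ge\dots\ge\sigma_n$ be the singular values of $A$. Suppose that for some $i\in\{1,\dots,n-1\}$ we have \[ |\lambda_i|>|\lambda_{i+1}| \quad\text{and}\quad \sigma_1\cdots\sigma_i=|\lambda_1\cdots\lambda_i|. \] Suppose $U,V\in GL_n(\mathbf{o}_F)$ are congruent to the identity matrix modulo $m_F$. Then the product of the $i$ eigenvalues of $UAV$ of largest norm has norm $|\lambda_1\cdots\lambda_i|$.
   Context: The eigenvalues of a matrix over $F$ are taken in an algebraic extension of $F$, equipped with the unique extension of the norm. The singular values $\sigma_1\ge\dots\ge\sigma_n$ of an $n\times n$ matrix $M$ over $F$ are defined by $\sigma_j=e^{-s_j}$, where $s_1,\dots,s_n$ is the sequence such that, for each $k=1,\dots,n$, $s_1+\dots+s_k$ is the minimum valuation $-\log|\cdot|$ of a $k\times k$ minor of $M$; equivalently $\sigma_1\cdots\sigma_k$ is the maximum norm of a $k\times k$ minor of $M$. *)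

(* Defs.v *)
From HB Require Import structures.
From mathcomp Require Import all_boot all_order all_algebra.
From mathcomp Require Import reals.
Set Implicit Arguments. Unset Strict Implicit. Unset Printing Implicit Defensive.
Import Order.TTheory GRing.Theory Num.Theory.
Local Open Scope ring_scope.

(* Setting: L is an algebraically closed field carrying a nonarchimedean
   absolute value v : L -> R; F is a subfield of L, complete for v.
   The algebraic closure of F inside L (where eigenvalues live) then carries
   the unique extension of the absolute value of F. *)

Definition nonarch_abs (R : realType) (L : fieldType) (v : L -> R) : Prop :=
  [/\ forall x, 0 <= v x,
      forall x, v x = 0 <-> x = 0,
      forall x y, v (x * y) = v x * v y &
      forall x y, v (x + y) <= Num.max (v x) (v y)].

Definition is_subfield (L : fieldType) (F : {pred L}) : Prop :=
  [/\ 0 \in F, 1 \in F,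
      forall x y, x \in F -> y \in F -> x - y \in F,
      forall x y, x \in F -> y \in F -> x * y \in F &
      forall x, x \in F -> x^-1 \in F].

Definition complete_for (R : realType) (L : fieldType) (v : L -> R)
  (F : {pred L}) : Prop :=
  forall u : nat -> L, (forall k, u k \in F) ->
    (forall e : R, 0 < e -> exists N, forall m k, (N <= m)%N -> (N <= k)%N ->
        v (u m - u k) < e) ->
    exists2 l, l \in F &
      forall e : R, 0 < e -> exists N, forall m, (N <= m)%N -> v (u m - l) < e.

Definition int_ring (R : realType) (L : fieldType) (v : L -> R) (F : {pred L})
  : {pred L} := [pred x | (x \in F) && (v x <= 1)].
Definition max_ideal (R : realType) (L : fieldType) (v : L -> R) (F : {pred L})
  : {pred L} := [pred x | (x \in F) && (v x < 1)].

Definition mx_over_pred (L : fieldType) (n : nat) (P : {pred L})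
  (A : 'M[L]_n) : Prop := forall i j, A i j \in P.

Definition in_GL_int (R : realType) (L : fieldType) (v : L -> R)
  (F : {pred L}) (n : nat) (U : 'M[L]_n) : Prop :=
  mx_over_pred (int_ring v F) U /\ v (\det U) = 1.

Definition cong_id_mod_m (R : realType) (L : fieldType) (v : L -> R)
  (F : {pred L}) (n : nat) (U : 'M[L]_n) : Prop :=
  forall i j, U i j - (i == j)%:R \in max_ideal v F.

Definition sorted_eigenvalues (R : realType) (L : fieldType) (v : L -> R)
  (n : nat) (A : 'M[L]_n) (s : seq L) : Prop :=
  char_poly A = \prod_(x <- s) ('X - x%:P) /\ sorted (fun x y => v y <= v x) s.

(* sigma_1 * ... * sigma_k : the maximum norm of a k x k minor of A *)
Definition sv_prod (R : realType) (L : fieldType) (v : L -> R)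
  (n : nat) (A : 'M[L]_n) (k : nat) : R :=
  \big[Num.max/0]_(f : {ffun 'I_k -> 'I_n})
    \big[Num.max/0]_(g : {ffun 'I_k -> 'I_n}) v (\det (mxsub f g A)).

(* Main.v *)
Require Import Defs.
From HB Require Import structures.
From mathcomp Require Import all_boot all_order all_algebra.
From mathcomp Require Import reals.
From mathcomp Require Import fingroup perm.
From mathcomp Require Import zify ring.
Import Order.TTheory GRing.Theory Num.Theory.
Set Implicit Arguments. Unset Strict Implicit. Unset Printing Implicit Defensive.
Local Open Scope ring_scope.

(* Proof outline:
   - upper bound: |prod of top i eigenvalues of B| <= max i-minor of B (peeling
     eigenvectors with integral changes of basis), and max i-minors of U A V are
     bounded by those of A (mixed Cauchy-Binet);
   - lower bound: the coefficient of X^(n-i) of char_poly(UAV) has norm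
     |lambda_1...lambda_i|, by comparing det(X W - A) with det(X - A) through a
     row-multilinear expansion, W = U^-1 V^-1 = 1 mod m_F. *)


Lemma v_ge0 (R : realType) (L : fieldType) (v : L -> R) :
  nonarch_abs v -> forall x, 0 <= v x.
Proof. by case. Qed.

Lemma v0 (R : realType) (L : fieldType) (v : L -> R) :
  nonarch_abs v -> v 0 = 0.
Proof. by case=> _ h _ _; apply/h. Qed.

Lemma vM (R : realType) (L : fieldType) (v : L -> R) :
  nonarch_abs v -> forall x y, v (x * y) = v x * v y.
Proof. by case. Qed.

Lemma v1 (R : realType) (L : fieldType) (v : L -> R) :
  nonarch_abs v -> v 1 = 1.
Proof.
move=> hv; have h1 : v 1 != 0 by apply/eqP; case: hv => _ h _ _; move/h/eqP; rewrite oner_eq0.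
have := vM hv 1 1; rewrite mulr1 => /eqP; rewrite -subr_eq0 -{1}(mulr1 (v 1)) -mulrBr mulf_eq0.
by rewrite (negPf h1) /= subr_eq0 => /eqP <-.
Qed.

Lemma vN1 (R : realType) (L : fieldType) (v : L -> R) :
  nonarch_abs v -> v (-1) = 1.
Proof.
move=> hv; have := vM hv (-1) (-1); rewrite mulrNN mulr1 (v1 hv) => /esym/eqP.
rewrite -expr2 -subr_eq0 subr_sqr_1 mulf_eq0 => /orP[/eqP h|].
  by move: h => /eqP; rewrite subr_eq0 => /eqP.
rewrite -(opprK 1) subr_eq0 => /eqP h; have := v_ge0 hv (-1); rewrite h.
by rewrite oppr_ge0 ler10.
Qed.

Lemma vN (R : realType) (L : fieldType) (v : L -> R) :
  nonarch_abs v -> forall x, v (- x) = v x.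
Proof. by move=> hv x; rewrite -mulN1r vM // vN1 // mul1r. Qed.

Lemma vexpN1 (R : realType) (L : fieldType) (v : L -> R) :
  nonarch_abs v -> forall k, v ((-1) ^+ k) = 1.
Proof.
move=> hv; elim=> [|k IH]; first by rewrite expr0 v1.
by rewrite exprS vM // vN1 // IH mul1r.
Qed.

Lemma vD (R : realType) (L : fieldType) (v : L -> R) :
  nonarch_abs v -> forall x y, v (x + y) <= Num.max (v x) (v y).
Proof. by case. Qed.

Lemma vB (R : realType) (L : fieldType) (v : L -> R) :
  nonarch_abs v -> forall x y, v (x - y) <= Num.max (v x) (v y).
Proof. by move=> hv x y; rewrite -(vN hv y) vD. Qed.

Lemma vD_lt (R : realType) (L : fieldType) (v : L -> R) :
  nonarch_abs v -> forall x y, v y < v x -> v (x + y) = v x.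
Proof.
move=> hv x y hyx; apply/le_anti/andP; split.
  by apply: le_trans (vD hv x y) _; rewrite ge_max lexx ltW.
have := vB hv (x + y) y; rewrite addrK => h.
move: (h); rewrite le_max => /orP[//|h2].
by move: (lt_le_trans hyx h2); rewrite ltxx.
Qed.

Lemma vsum_le (R : realType) (L : fieldType) (v : L -> R) :
  nonarch_abs v -> forall (I : Type) (r : seq I) (P : pred I) (F : I -> L) (c : R),
  (forall i, P i -> v (F i) <= c) -> 0 <= c -> v (\sum_(i <- r | P i) F i) <= c.
Proof.
move=> hv I r P F c h c0; apply: (big_ind (fun x => v x <= c)).
- by rewrite v0.
- by move=> x y hx hy; apply: le_trans (vD hv x y) _; rewrite ge_max hx hy.
- exact: h.
Qed.

Lemma vsum_lt (R : realType) (L : fieldType) (v : L -> R) :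
  nonarch_abs v -> forall (I : Type) (r : seq I) (P : pred I) (F : I -> L) (c : R),
  (forall i, P i -> v (F i) < c) -> 0 < c -> v (\sum_(i <- r | P i) F i) < c.
Proof.
move=> hv I r P F c h c0; apply: (big_ind (fun x => v x < c)).
- by rewrite v0.
- by move=> x y hx hy; apply: le_lt_trans (vD hv x y) _; rewrite gt_max hx hy.
- exact: h.
Qed.

Lemma vprod (R : realType) (L : fieldType) (v : L -> R) :
  nonarch_abs v -> forall (I : Type) (r : seq I) (P : pred I) (F : I -> L),
  v (\prod_(i <- r | P i) F i) = \prod_(i <- r | P i) v (F i).
Proof.
move=> hv I r P F; apply: (big_morph v (vM hv) (v1 hv)).
Qed.

Lemma le_bigmax (R : realType) (I : finType) (F : I -> R) (i : I) :
  F i <= \big[Num.max/0]_j F j.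
Proof. by rewrite (bigD1 i) //= le_max lexx. Qed.

Lemma bigmax_le (R : realType) (I : finType) (F : I -> R) (c : R) :
  (forall j, F j <= c) -> 0 <= c -> \big[Num.max/0]_j F j <= c.
Proof.
move=> h c0; apply: (big_ind (fun x => x <= c)) => //.
by move=> x y hx hy; rewrite ge_max hx hy.
Qed.

Lemma bigmax_lt (R : realType) (I : finType) (F : I -> R) (c : R) :
  (forall j, F j < c) -> 0 < c -> \big[Num.max/0]_j F j < c.
Proof.
move=> h c0; apply: (big_ind (fun x => x < c)) => //.
by move=> x y hx hy; rewrite gt_max hx hy.
Qed.

Lemma bigmax_ge0 (R : realType) (I : finType) (F : I -> R) :
  (forall j, 0 <= F j) -> 0 <= \big[Num.max/0]_j F j.
Proof.
move=> h; apply: (big_ind (fun x => 0 <= x)) => //.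
by move=> x y hx hy; rewrite le_max hx.
Qed.


Lemma det_mul_col (L : comPzRingType) (k n : nat) (P : 'M[L]_(k, n)) (Q : 'M[L]_(n, k)) :
  \det (P *m Q) = \sum_(h : {ffun 'I_k -> 'I_n}) \det (colsub h P) * \prod_b Q (h b) b.
Proof.
rewrite /determinant.
under eq_bigr => s _.
  under eq_bigr => a _ do rewrite mxE.
  rewrite bigA_distr_bigA /=.
  rewrite (reindex (fun h : {ffun 'I_k -> 'I_n} => [ffun a => h (s a)])) /=; last first.
    exists (fun phi : {ffun 'I_k -> 'I_n} => [ffun b => phi ((s^-1)%g b)]) => h _.
      by apply/ffunP => b; rewrite !ffunE permKV.
    by apply/ffunP => b; rewrite !ffunE permK.
  under eq_bigr => h _.
    rewrite big_split /=.
    under eq_bigr => a _ do rewrite ffunE.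
    under [X in _ * X]eq_bigr => a _ do rewrite ffunE.
    rewrite [X in _ * X](reindex_inj (@perm_inj _ s^-1)%g) /=.
    under [X in _ * X]eq_bigr => a _ do rewrite permKV.
    over.
  rewrite mulr_sumr; over.
rewrite exchange_big /=; apply: eq_bigr => h _.
rewrite mulr_suml; apply: eq_bigr => s _.
rewrite mulrA; congr (_ * _ * _); apply: eq_bigr => a _.
by rewrite mxE.
Qed.

Lemma det_mul_row (L : comPzRingType) (k n : nat) (P : 'M[L]_(k, n)) (Q : 'M[L]_(n, k)) :
  \det (P *m Q) = \sum_(h : {ffun 'I_k -> 'I_n}) (\prod_a P a (h a)) * \det (rowsub h Q).
Proof.
rewrite -det_tr trmx_mul det_mul_col; apply: eq_bigr => h _.
rewrite mulrC -[\det (rowsub h Q)]det_tr trmx_mxsub.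
by congr (_ * _); apply: eq_bigr => b _; rewrite mxE.
Qed.

Lemma mxsub_mul (L : pzSemiRingType) (m n p k l : nat) (f : 'I_k -> 'I_m) (g : 'I_l -> 'I_p)
  (X : 'M[L]_(m, n)) (Y : 'M[L]_(n, p)) :
  mxsub f g (X *m Y) = rowsub f X *m colsub g Y.
Proof. by apply/matrixP => a b; rewrite !mxE; apply: eq_bigr => c _; rewrite !mxE. Qed.

Definition intg (R : realType) (L : fieldType) (v : L -> R) (m n : nat) (M : 'M[L]_(m, n)) :=
  forall a b, v (M a b) <= 1.


Lemma sv_ge0 (R : realType) (L : fieldType) (v : L -> R) :
  nonarch_abs v -> forall n (A : 'M[L]_n) k, 0 <= sv_prod v A k.
Proof.
move=> hv n A k; apply: bigmax_ge0 => f; apply: bigmax_ge0 => g; exact: v_ge0.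
Qed.

Lemma sv_minor (R : realType) (L : fieldType) (v : L -> R) n (A : 'M[L]_n) k
  (f g : {ffun 'I_k -> 'I_n}) : v (\det (mxsub f g A)) <= sv_prod v A k.
Proof.
have h1 := le_bigmax (fun g : {ffun 'I_k -> 'I_n} => v (\det (mxsub f g A))) g.
have h2 := le_bigmax (fun f : {ffun 'I_k -> 'I_n} =>
   \big[Num.max/0]_(g : {ffun 'I_k -> 'I_n}) v (\det (mxsub f g A))) f.
exact: le_trans h1 h2.
Qed.

Lemma sv_minor' (R : realType) (L : fieldType) (v : L -> R) n (A : 'M[L]_n) k
  (f g : 'I_k -> 'I_n) : v (\det (mxsub f g A)) <= sv_prod v A k.
Proof.
by have := sv_minor v A (finfun f) (finfun g); rewrite mxsub_ffun.
Qed.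

Lemma sv_le (R : realType) (L : fieldType) (v : L -> R) n (A : 'M[L]_n) k c :
  (forall (f g : 'I_k -> 'I_n), v (\det (mxsub f g A)) <= c) -> 0 <= c ->
  sv_prod v A k <= c.
Proof.
move=> h c0; apply: bigmax_le => // f; apply: bigmax_le => // g; exact: h.
Qed.

Lemma prod_intg (R : realType) (L : fieldType) (v : L -> R) :
  nonarch_abs v -> forall (I : finType) (F : I -> L), (forall i, v (F i) <= 1) ->
  v (\prod_i F i) <= 1.
Proof.
move=> hv I F h; rewrite vprod //; apply: le_trans (ler_prod (E2 := fun _ => 1) _ _) _.
  by move=> i _; rewrite v_ge0 // h.
by rewrite big1.
Qed.

Lemma sv_mul_intg (R : realType) (L : fieldType) (v : L -> R) :
  nonarch_abs v -> forall n (P B Q : 'M[L]_n) k, intg v P -> intg v Q ->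
  sv_prod v (P *m B *m Q) k <= sv_prod v B k.
Proof.
move=> hv n P B Q k hP hQ; apply: sv_le; last exact: sv_ge0.
move=> f g; rewrite mxsub_mul det_mul_col; apply: vsum_le => //; last exact: sv_ge0.
move=> h _; rewrite vM //.
have H2 : v (\prod_b colsub g Q (h b) b) <= 1.
  by apply: prod_intg => // b; rewrite mxE hQ.
have H1 : v (\det (colsub h (rowsub f (P *m B)))) <= sv_prod v B k.
  rewrite -mxsubcr mxsub_mul det_mul_row; apply: vsum_le => //; last exact: sv_ge0.
  move=> h' _; rewrite vM //.
  have H3 : v (\prod_a rowsub f P a (h' a)) <= 1.
    by apply: prod_intg => // a; rewrite mxE hP.
  rewrite -mxsubrc.
  by apply: le_trans (ler_pM _ _ H3 (sv_minor' v B h' h)) _; rewrite ?v_ge0 // mul1r.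
by apply: le_trans (ler_pM _ _ H1 H2) _; rewrite ?v_ge0 // mulr1.
Qed.


Lemma det_intg (R : realType) (L : fieldType) (v : L -> R) :
  nonarch_abs v -> forall n (W : 'M[L]_n), intg v W -> v (\det W) <= 1.
Proof.
move=> hv n W hW; rewrite /determinant; apply: vsum_le => // s _.
by rewrite vM // vexpN1 // mul1r; apply: prod_intg.
Qed.

Lemma vinv (R : realType) (L : fieldType) (v : L -> R) :
  nonarch_abs v -> forall x, x != 0 -> v x^-1 = (v x)^-1.
Proof.
move=> hv x x0; have : v x * v x^-1 = 1 by rewrite -vM // mulfV // v1.
have vx0 : v x != 0 by apply/eqP; case: hv => _ h _ _; move/h; apply/eqP.
by move=> h; rewrite -[LHS]mul1r -(mulVf vx0) -mulrA h mulr1.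
Qed.

Lemma v_neq0 (R : realType) (L : fieldType) (v : L -> R) :
  nonarch_abs v -> forall x, v x != 0 -> x != 0.
Proof. by move=> hv x; apply: contra => /eqP ->; rewrite v0. Qed.

Lemma unit_of_v1 (R : realType) (L : fieldType) (v : L -> R) :
  nonarch_abs v -> forall n (W : 'M[L]_n), v (\det W) = 1 -> W \in unitmx.
Proof.
move=> hv n W h; rewrite unitmxE unitfE; apply: (v_neq0 hv); rewrite h; exact: oner_neq0.
Qed.

Lemma inv_intg (R : realType) (L : fieldType) (v : L -> R) :
  nonarch_abs v -> forall n (W : 'M[L]_n), intg v W -> v (\det W) = 1 -> intg v (invmx W).
Proof.
move=> hv n W hW hd a b; rewrite /invmx (unit_of_v1 hv hd) !mxE vM //.
have d0 : \det W != 0 by apply: (v_neq0 hv); rewrite hd oner_neq0.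
rewrite vinv // hd invr1 mul1r /cofactor vM // vexpN1 // mul1r.
by apply: det_intg => // c e; rewrite !mxE.
Qed.

Lemma mul_intg (R : realType) (L : fieldType) (v : L -> R) :
  nonarch_abs v -> forall m n p (P : 'M[L]_(m, n)) (Q : 'M[L]_(n, p)),
  intg v P -> intg v Q -> intg v (P *m Q).
Proof.
move=> hv m n p P Q hP hQ a b; rewrite mxE; apply: vsum_le => // c _.
by rewrite vM //; apply: le_trans (ler_pM _ _ (hP a c) (hQ c b)) _; rewrite ?v_ge0 ?mulr1.
Qed.

Lemma intg1 (R : realType) (L : fieldType) (v : L -> R) :
  nonarch_abs v -> forall n, intg v (1%:M : 'M[L]_n).
Proof.
by move=> hv n a b; rewrite mxE; case: (a == b); rewrite /= ?mulr1n ?mulr0n ?v1 ?v0.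
Qed.

Lemma char_poly_conj (L : fieldType) n (K B : 'M[L]_n) : K \in unitmx ->
  char_poly (K *m B *m invmx K) = char_poly B.
Proof.
move=> hK; rewrite /char_poly.
have -> : char_poly_mx (K *m B *m invmx K) =
   map_mx polyC K *m char_poly_mx B *m map_mx polyC (invmx K).
  rewrite /char_poly_mx mulmxBr mulmxBl -!map_mxM scalar_mxC -(mulmxA 'X%:M).
  by rewrite -map_mxM mulmxV // map_mx1 mulmx1.
rewrite !det_mulmx !det_map_mx mulrC mulrA -rmorphM /= -det_mulmx mulVmx //.
by rewrite det1 polyC1 mul1r.
Qed.


Lemma argmax_ex (R : realType) (I : finType) (i0 : I) (F : I -> R) :
  exists j, forall l, F l <= F j.
Proof.
have [j hj] : exists j, \big[Num.max/F i0]_i F i = F j.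
  apply: (big_ind (fun y => exists j, y = F j)); first by exists i0.
    move=> x y [a ->] [b ->]; case: (leP (F a) (F b)) => _.
      by exists b. by exists a.
    by move=> i _; exists i.
by exists j => l; rewrite -hj (bigD1 l) //= le_max lexx.
Qed.

Lemma basis_row (R : realType) (L : fieldType) (v : L -> R) :
  nonarch_abs v -> forall n (y : 'rV[L]_n.+1) j, y 0 j = 1 -> (forall l, v (y 0 l) <= 1) ->
  exists K : 'M[L]_n.+1, [/\ intg v K, v (\det K) = 1 & row ord_max K = y].
Proof.
move=> hv n y j yj yl.
pose z := xcol j ord_max y.
pose K0 : 'M[L]_n.+1 := \matrix_(a, b) if a == ord_max then z 0 b else (a == b)%:R.
exists (K0 *m tperm_mx j ord_max); split.
- apply: mul_intg => //; last by rewrite tperm_mxEsub => a b; rewrite mxE; apply: intg1.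
  move=> a b; rewrite mxE; case: (a == ord_max); first by rewrite mxE yl.
  by have := @intg1 _ _ _ hv n.+1 a b; rewrite mxE.
- rewrite det_mulmx vM // det_perm vexpN1 // mulr1.
  rewrite det_trig; last first.
    apply/is_trig_mxP => a b ab; rewrite mxE.
    have -> : (a == ord_max) = false.
      by apply/eqP => ha; move: (ltn_ord b) ab; rewrite ha /=; lia.
    by rewrite (_ : (a == b) = false) //; apply/eqP => hab; move: ab; rewrite hab; lia.
  rewrite (bigD1 ord_max) //= big1 ?mulr1; last first.
    by move=> a /negbTE ha; rewrite mxE ha eqxx.
  by rewrite mxE eqxx mxE tpermR yj v1.
- rewrite row_mul; apply/rowP => b; rewrite !mxE.
  rewrite (bigD1 (tperm j ord_max b)) //= big1.
    have hK : tperm j ord_max (tperm j ord_max b) = b by exact: tpermK.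
    by rewrite !mxE eqxx hK eqxx mulr1 addr0.
  move=> a ha; rewrite !mxE /=.
  have -> : (tperm j ord_max a == b) = false.
    apply/negbTE; apply: contra ha => /eqP <-.
    by have -> : tperm j ord_max (tperm j ord_max a) = a by exact: tpermK.
  by rewrite mulr0.
Qed.

Lemma minor_ext (L : comPzRingType) n k (C : 'M[L]_n.+1) mu
  (hC : forall b, C ord_max b = mu * (ord_max == b)%:R) (f' g' : 'I_k -> 'I_n) :
  exists f g : 'I_k.+1 -> 'I_n.+1,
    \det (mxsub f g C) = mu * \det (mxsub f' g' (row' ord_max (col' ord_max C))).
Proof.
pose f := fun a : 'I_k.+1 => if unlift ord_max a is Some b then lift ord_max (f' b) else ord_max.
pose g := fun a : 'I_k.+1 => if unlift ord_max a is Some b then lift ord_max (g' b) else ord_max.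
exists f, g.
rewrite (expand_det_row _ ord_max) (bigD1 ord_max) //= big1 ?addr0.
  rewrite mxE /f /g unlift_none hC eqxx mulr1; congr (_ * _).
  rewrite /cofactor -signr_odd oddD addbb expr0 mul1r; congr (\det _).
  by apply/matrixP => a b; rewrite !mxE !liftK.
move=> b hb; rewrite mxE /f /g unlift_none hC.
case: unliftP hb => [b' -> _|-> /eqP //].
by rewrite (negbTE (neq_lift _ _)) mulr0 mul0r.
Qed.

Lemma sv0 (R : realType) (L : fieldType) (v : L -> R) :
  nonarch_abs v -> forall n (B : 'M[L]_n), 1 <= sv_prod v B 0.
Proof.
move=> hv n B; have := sv_minor v B (ffun0 (card_ord 0)) (ffun0 (card_ord 0)).
by rewrite det_mx00 v1.
Qed.

Lemma peel (R : realType) (L : fieldType) (v : L -> R) :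
  nonarch_abs v -> forall n (B : 'M[L]_n) (t : seq L) k,
  char_poly B = \prod_(x <- t) ('X - x%:P) -> (k <= n)%N ->
  v (\prod_(x <- take k t) x) <= sv_prod v B k.
Proof.
move=> hv; elim=> [|n IH] B t [|k] hB hk.
- by rewrite take0 big_nil v1 // sv0.
- by [].
- by rewrite take0 big_nil v1 // sv0.
have st : size t = n.+1.
  by move: (size_char_poly B); rewrite hB size_prod_XsubC => -[].
case: t hB st => [//|mu t'] hB st.
have : eigenvalue B mu by rewrite eigenvalue_root_char hB root_prod_XsubC mem_head.
case/eigenvalueP => x hx x0.
have [j hj] := argmax_ex ord0 (fun l => v (x 0 l)).
have xj0 : x 0 j != 0.
  apply: contra x0 => /eqP xj; apply/eqP/rowP => l; rewrite mxE.
  have := hj l; rewrite /= xj v0 // => h.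
  have : v (x 0 l) = 0 by apply/le_anti; rewrite h v_ge0.
  by case: hv => _ hz _ _; move/hz.
have vxj : 0 < v (x 0 j).
  rewrite lt_def v_ge0 // andbT; apply/eqP => h; move: xj0.
  by case: hv => _ hz _ _; move/hz: h => ->; rewrite eqxx.
pose y := (x 0 j)^-1 *: x.
have yj : y 0 j = 1 by rewrite mxE mulVf.
have yl : forall l, v (y 0 l) <= 1.
  move=> l; rewrite mxE vM // vinv // mulrC ler_pdivrMr // mul1r; exact: hj.
have hy : y *m B = mu *: y by rewrite /y -scalemxAl hx !scalerA mulrC.
have [K [Ki Kd Kr]] := basis_row hv yj yl.
have Ku : K \in unitmx := unit_of_v1 hv Kd.
have [C hCdef] : {C | C = K *m B *m invmx K} by exists (K *m B *m invmx K).
have hrow : row ord_max C = mu *: row ord_max 1%:M.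
  by rewrite hCdef !row_mul Kr hy -scalemxAl -Kr -row_mul mulmxV.
have hC : forall b, C ord_max b = mu * (ord_max == b)%:R.
  by move=> b; have := congr1 (fun M : 'rV[L]_n.+1 => M 0 b) hrow; rewrite !mxE => ->.
pose C' := row' ord_max (col' ord_max C).
have hchar : char_poly C' = \prod_(x <- t') ('X - x%:P).
  have e1 : char_poly C = ('X - mu%:P) * char_poly C'.
    rewrite /char_poly (expand_det_row _ ord_max) (bigD1 ord_max) //= big1 ?addr0.
      rewrite /cofactor row'_col'_char_poly_mx -signr_odd oddD addbb expr0 mul1r.
      by rewrite !mxE hC eqxx mulr1 mulr1n.
    move=> b hb; rewrite !mxE hC eq_sym (negbTE hb) mulr0 mulr0n.
    by rewrite sub0r oppr0 mul0r.
  have e2 : char_poly C = ('X - mu%:P) * \prod_(x <- t') ('X - x%:P).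
    by rewrite hCdef char_poly_conj // hB big_cons.
  by apply: (mulfI (monic_neq0 (monicXsubC mu))); rewrite -e1 -e2.
have IHk := IH C' t' k hchar hk.
rewrite /= big_cons vM //.
have SC : sv_prod v C k.+1 <= sv_prod v B k.+1.
  by rewrite hCdef; apply: sv_mul_intg => //; apply: inv_intg.
apply: le_trans SC.
apply: le_trans (ler_wpM2l (v_ge0 hv mu) IHk) _.
have [vmu0|vmu0] := eqVneq (v mu) 0; first by rewrite vmu0 mul0r sv_ge0.
have vmu : 0 < v mu by rewrite lt_def vmu0 v_ge0.
rewrite mulrC -ler_pdivlMr //; apply: sv_le; last by rewrite divr_ge0 ?sv_ge0 ?v_ge0.
move=> f' g'; rewrite ler_pdivlMr // mulrC.
have [f [g hfg]] := minor_ext hC f' g'.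
by rewrite -vM // -hfg; apply: sv_minor'.
Qed.


Definition MT (L : pzRingType) n (W A : 'M[L]_n) (T : {set 'I_n}) : 'M[L]_n :=
  \matrix_(a, b) if a \in T then A a b else W a b.

Lemma MT_E (L : pzRingType) n (W A : 'M[L]_n) T a b :
  MT W A T a b = if a \in T then A a b else W a b.
Proof. by rewrite mxE. Qed.

Lemma MT_setT (L : pzRingType) n (W A : 'M[L]_n) : MT W A setT = A.
Proof. by apply/matrixP => a b; rewrite mxE in_setT. Qed.

Lemma MT_rowcol (L : pzRingType) n (W A : 'M[L]_n.+1) T r j :
  row' r (col' j (MT W A T)) =
  MT (row' r (col' j W)) (row' r (col' j A)) [set a | lift r a \in T].
Proof. by apply/matrixP => a b; rewrite !mxE inE. Qed.

Lemma card_liftset n (T : {set 'I_n.+1}) r : r \notin T ->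
  #|[set a | lift r a \in T]| = #|T|.
Proof.
move=> hr; rewrite -(card_imset _ (@lift_inj _ r)); apply: eq_card => x.
apply/imsetP/idP => [[a]|hx].
  by rewrite inE => ha ->.
case: (unliftP r x) hx => [x' -> hx|-> hx]; last by move: hr; rewrite hx.
by exists x'; rewrite ?inE.
Qed.

Lemma sv_rowcol (R : realType) (L : fieldType) (v : L -> R) :
  nonarch_abs v -> forall n (A : 'M[L]_n.+1) r j k,
  sv_prod v (row' r (col' j A)) k <= sv_prod v A k.
Proof.
move=> hv n A r j k; apply: sv_le; last exact: sv_ge0.
move=> f g; rewrite (_ : mxsub f g _ = mxsub (lift r \o f) (lift j \o g) A).
  exact: sv_minor'.
by apply/matrixP => a b; rewrite !mxE.
Qed.

Lemma notT_ex n (T : {set 'I_n}) : T != setT -> exists r, r \notin T.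
Proof.
move=> hT; apply/existsP; apply: contraR hT; rewrite negb_exists => /forallP h.
by apply/eqP/setP => x; rewrite in_setT; move: (h x); rewrite negbK.
Qed.

Lemma sv_det (R : realType) (L : fieldType) (v : L -> R) n (A : 'M[L]_n) :
  v (\det A) <= sv_prod v A n.
Proof.
have := sv_minor' v A id id.
by rewrite (_ : mxsub id id A = A) //; apply/matrixP => a b; rewrite mxE.
Qed.

Lemma MT_bound (R : realType) (L : fieldType) (v : L -> R) :
  nonarch_abs v -> forall n (W A : 'M[L]_n) T, intg v W ->
  v (\det (MT W A T)) <= sv_prod v A #|T|.
Proof.
move=> hv; elim=> [|n IH] W A T hW.
  have -> : T = setT by apply/setP => -[].
  by rewrite MT_setT cardsT card_ord sv_det.
have [->|/notT_ex [r hr]] := eqVneq T setT.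
  by rewrite MT_setT cardsT card_ord sv_det.
rewrite (expand_det_row _ r); apply: vsum_le => //; last exact: sv_ge0.
move=> b _; rewrite MT_E (negbTE hr) /cofactor MT_rowcol !(vM hv) (vexpN1 hv) mul1r.
have hW' : intg v (row' r (col' b W)) by move=> a c; rewrite !mxE hW.
have h1 := IH (row' r (col' b W)) (row' r (col' b A)) [set a | lift r a \in T] hW'.
rewrite card_liftset // in h1.
have h2 := le_trans h1 (sv_rowcol hv A r b _).
by apply: le_trans (ler_pM _ _ (hW r b) h2) _; rewrite ?v_ge0 // mul1r.
Qed.

Lemma MT_diff (R : realType) (L : fieldType) (v : L -> R) :
  nonarch_abs v -> forall n (W W0 A : 'M[L]_n) T (th : R), 0 <= th ->
  intg v W -> intg v W0 -> (forall a b, v (W a b - W0 a b) <= th) ->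
  v (\det (MT W A T) - \det (MT W0 A T)) <= th * sv_prod v A #|T|.
Proof.
move=> hv; elim=> [|n IH] W W0 A T th th0 hW hW0 hd.
  have -> : T = setT by apply/setP => -[].
  by rewrite !MT_setT subrr (v0 hv) mulr_ge0 // sv_ge0.
have [->|/notT_ex [r hr]] := eqVneq T setT.
  by rewrite !MT_setT subrr (v0 hv) mulr_ge0 // sv_ge0.
rewrite (expand_det_row _ r) (expand_det_row (MT W0 A T) r) -sumrB.
apply: vsum_le => //; last by rewrite mulr_ge0 // sv_ge0.
move=> b _; rewrite !MT_E (negbTE hr) /cofactor !MT_rowcol.
set T' := [set a | lift r a \in T].
set d := \det (MT (row' r (col' b W)) (row' r (col' b A)) T').
set d0 := \det (MT (row' r (col' b W0)) (row' r (col' b A)) T').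
have hW' : intg v (row' r (col' b W)) by move=> a c; rewrite !mxE hW.
have hW0' : intg v (row' r (col' b W0)) by move=> a c; rewrite !mxE hW0.
have hd' : forall a c, v (row' r (col' b W) a c - row' r (col' b W0) a c) <= th.
  by move=> a c; rewrite !mxE hd.
have hS : sv_prod v (row' r (col' b A)) #|T'| <= sv_prod v A #|T|.
  by rewrite card_liftset //; apply: sv_rowcol.
have b1 : v d <= sv_prod v A #|T|.
  exact: le_trans (MT_bound hv (row' r (col' b A)) T' hW') hS.
have b2 : v (d - d0) <= th * sv_prod v A #|T|.
  apply: le_trans (IH _ _ (row' r (col' b A)) T' th th0 hW' hW0' hd') _.
  by apply: ler_wpM2l.
have -> : W r b * ((-1) ^+ (r + b) * d) - W0 r b * ((-1) ^+ (r + b) * d0) =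
          (-1) ^+ (r + b) * ((W r b - W0 r b) * d + W0 r b * (d - d0)).
  by ring.
rewrite (vM hv) (vexpN1 hv) mul1r; apply: le_trans (vD hv _ _) _; rewrite ge_max !(vM hv).
apply/andP; split.
  by apply: le_trans (ler_pM _ _ (hd r b) b1) _; rewrite ?(v_ge0 hv).
by apply: le_trans (ler_pM _ _ (hW0 r b) b2) _; rewrite ?(v_ge0 hv) // mul1r.
Qed.


Definition PM (L : fieldType) n (W A : 'M[L]_n) : 'M[{poly L}]_n :=
  'X *: map_mx (@polyC L) W - map_mx (@polyC L) A.

Lemma PM_E (L : fieldType) n (W A : 'M[L]_n) a b :
  PM W A a b = 'X * (W a b)%:P - (A a b)%:P.
Proof. by rewrite !mxE. Qed.

Lemma oppmx_E (L : fieldType) n (A : 'M[L]_n) a b : (- A) a b = - A a b.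
Proof. by rewrite mxE. Qed.

Lemma prod_split_X (L : fieldType) n (J : {set 'I_n}) (c d : 'I_n -> L) :
  \prod_a (if a \in J then (c a)%:P else 'X * (d a)%:P) =
  'X^(n - #|J|) * (\prod_a (if a \in J then c a else d a))%:P.
Proof.
rewrite (eq_bigr (fun a => (if a \in ~: J then 'X else 1) *
                           (if a \in J then c a else d a)%:P)); last first.
  by move=> a _; rewrite in_setC; case: (a \in J); rewrite /= ?mul1r // mulrC.
rewrite big_split /= rmorph_prod; congr (_ * _).
rewrite -big_mkcond prodr_const; congr (_ ^+ _).
by move: (cardsC J); rewrite card_ord => h; rewrite -[X in (X - _)%N]h addKn.
Qed.

Lemma det_PM (L : fieldType) n (W A : 'M[L]_n) :
  \det (PM W A) = \sum_(T : {set 'I_n}) 'X^(n - #|T|) * (\det (MT W (- A) T))%:P.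
Proof.
rewrite /determinant; symmetry.
under eq_bigr => T _ do rewrite rmorph_sum mulr_sumr.
rewrite exchange_big /=; apply: eq_bigr => s _.
rewrite (eq_bigr (fun a => (- A a (s a))%:P + 'X * (W a (s a))%:P)); last first.
  by move=> a _; rewrite PM_E polyCN addrC.
rewrite bigA_distr mulr_sumr; apply: eq_bigr => J _.
rewrite prod_split_X rmorphM /= rmorph_sign mulrCA; congr (_ * (_ * _%:P)).
by apply: eq_bigr => a _; rewrite MT_E oppmx_E.
Qed.

Lemma coef_sumT (L : fieldType) n (c : {set 'I_n} -> L) k : (k <= n)%N ->
  (\sum_(T : {set 'I_n}) 'X^(n - #|T|) * (c T)%:P)`_(n - k) = \sum_(T : {set 'I_n} | #|T| == k) c T.
Proof.
move=> kn; rewrite coef_sum [RHS]big_mkcond; apply: eq_bigr => T _.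
rewrite coefXnM coefC.
have hT : (#|T| <= n)%N by rewrite -[n in (_ <= n)%N]card_ord max_card.
case: (eqVneq #|T| k) => [hk|hk].
  by rewrite hk ltnn subnn eqxx.
case: ifP => // h1.
have -> : (n - k - (n - #|T|) == 0)%N = false.
  apply/negbTE/eqP => h2; apply/eqP: hk; lia.
by [].
Qed.

Lemma sv_opp (R : realType) (L : fieldType) (v : L -> R) :
  nonarch_abs v -> forall n (A : 'M[L]_n) k, sv_prod v (- A) k = sv_prod v A k.
Proof.
move=> hv n A k; rewrite /sv_prod; apply: eq_bigr => f _; apply: eq_bigr => g _.
have -> : mxsub f g (- A) = (-1) *: mxsub f g A.
  by apply/matrixP => a b; rewrite !mxE mulN1r.
by rewrite detZ (vM hv) (vexpN1 hv) mul1r.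
Qed.

Lemma coef_PM_diff (R : realType) (L : fieldType) (v : L -> R) :
  nonarch_abs v -> forall n (W A : 'M[L]_n) (th : R) k, 0 <= th -> intg v W ->
  (forall a b, v (W a b - (1%:M : 'M[L]_n) a b) <= th) -> (k <= n)%N ->
  v ((\det (PM W A))`_(n - k) - (\det (PM 1%:M A))`_(n - k)) <= th * sv_prod v A k.
Proof.
move=> hv n W A th k th0 hW hd kn.
rewrite !det_PM !coef_sumT // -sumrB; apply: vsum_le => //; last first.
  by rewrite mulr_ge0 // sv_ge0.
move=> T /eqP hT; rewrite -hT -(sv_opp hv A).
by apply: MT_diff => //; apply: intg1.
Qed.

Lemma char_poly_PM1 (L : fieldType) n (A : 'M[L]_n) : char_poly A = \det (PM 1%:M A).
Proof. by rewrite /char_poly /char_poly_mx /PM map_mx1 scalemx1. Qed.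

Lemma char_poly_UAV (L : fieldType) n (U A V : 'M[L]_n) : U \in unitmx -> V \in unitmx ->
  char_poly (U *m A *m V) = (\det U * \det V)%:P * \det (PM (invmx U *m invmx V) A).
Proof.
move=> hU hV; rewrite /char_poly.
have -> : char_poly_mx (U *m A *m V) =
   map_mx (@polyC L) U *m PM (invmx U *m invmx V) A *m map_mx (@polyC L) V.
  rewrite /PM mulmxBr mulmxBl -!map_mxM -scalemxAr -scalemxAl -!map_mxM.
  rewrite !mulmxA mulmxV // mul1mx mulVmx // map_mx1 scalemx1.
  by [].
rewrite !det_mulmx !det_map_mx rmorphM /=.
by rewrite mulrAC mulrC.
Qed.


Lemma srt_nth (R : realType) (L : fieldType) (v : L -> R) (s : seq L) :
  sorted (fun x y => v y <= v x) s ->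
  forall a b, (a <= b)%N -> (b < size s)%N -> v s`_b <= v s`_a.
Proof.
move=> hs a b ab bs.
have tr : transitive (fun x y : L => v y <= v x).
  by move=> y x z h1 h2; apply: le_trans h2 h1.
have rf : reflexive (fun x y : L => v y <= v x) by move=> x; exact: lexx.
apply: (sorted_leq_nth tr rf 0 hs) => //; rewrite inE //; lia.
Qed.

Definition I0 n i (hi : (i <= n)%N) : {set 'I_n} := [set widen_ord hi a | a in 'I_i].

Lemma mem_I0 n i (hi : (i <= n)%N) (x : 'I_n) : (x \in I0 hi) = (x < i)%N.
Proof.
apply/imsetP/idP => [[a _ ->] /=|hx]; first exact: ltn_ord.
by exists (Ordinal hx) => //; apply: val_inj.
Qed.

Lemma widen_inj n i (hi : (i <= n)%N) : injective (widen_ord hi).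
Proof. by move=> a b /(congr1 val) /= h; apply: val_inj. Qed.

Lemma card_I0 n i (hi : (i <= n)%N) : #|I0 hi| = i.
Proof. by rewrite card_imset ?card_ord //; apply: widen_inj. Qed.

Lemma prod_I0 (L : fieldType) (s : seq L) i (hi : (i <= size s)%N) :
  \prod_(a in I0 hi) s`_a = \prod_(x <- take i s) x.
Proof.
rewrite big_imset /=; last by move=> a b _ _; apply: widen_inj.
rewrite (big_nth 0) size_take.
have -> : (if (i < size s)%N then i else size s) = i.
  by case: ltnP => // h; apply/eqP; rewrite eqn_leq hi h.
rewrite big_mkord; apply: eq_bigr => a _; rewrite nth_take //.
Qed.

Lemma top_cmp (R : realType) (L : fieldType) (v : L -> R) :
  nonarch_abs v -> forall (s : seq L) i (hi : (i <= size s)%N),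
  sorted (fun x y => v y <= v x) s -> (0 < i < size s)%N ->
  forall I : {set 'I_(size s)}, #|I| = i ->
  \prod_(a in I) v s`_a <= \prod_(a in I0 hi) v s`_a /\
  (v s`_i < v s`_i.-1 -> I != I0 hi -> \prod_(a in I) v s`_a < \prod_(a in I0 hi) v s`_a).
Proof.
move=> hv s i hi hs /andP[i0 iS] I hI.
set al := v s`_i.-1; set be := v s`_i.
have ba : be <= al by apply: srt_nth => //; lia.
have be0 : 0 <= be by apply: v_ge0.
set J := I0 hi.
have hD1 : \prod_(a in I :\: J) v s`_a <= be ^+ #|I :\: J|.
  rewrite -prodr_const; apply: ler_prod => a; rewrite inE mem_I0 => /andP[ha _].
  rewrite v_ge0 //=; apply: srt_nth => //; lia.
have hD0 : al ^+ #|J :\: I| <= \prod_(a in J :\: I) v s`_a.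
  rewrite -prodr_const; apply: ler_prod => a; rewrite inE mem_I0 => /andP[_ ha].
  rewrite (le_trans be0 ba) /=; apply: srt_nth => //; lia.
have hm : #|I :\: J| = #|J :\: I|.
  by rewrite !cardsD hI card_I0 setIC.
have hC0 : 0 <= \prod_(a in I :&: J) v s`_a by apply: prodr_ge0 => a _; apply: v_ge0.
have eI : \prod_(a in I) v s`_a = \prod_(a in I :&: J) v s`_a * \prod_(a in I :\: J) v s`_a.
  by rewrite (big_setID J).
have eJ : \prod_(a in J) v s`_a = \prod_(a in I :&: J) v s`_a * \prod_(a in J :\: I) v s`_a.
  by rewrite (big_setID I) setIC.
have hp : be ^+ #|I :\: J| <= al ^+ #|J :\: I|.
  by rewrite hm; apply: lerXn2r => //; rewrite nnegrE // (le_trans be0 ba).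
split.
  rewrite eI eJ; apply: ler_wpM2l => //; exact: le_trans hD1 (le_trans hp hD0).
move=> gap hIJ.
have hC : 0 < \prod_(a in I :&: J) v s`_a.
  apply: prodr_gt0 => a; rewrite inE mem_I0 => /andP[_ ha].
  apply: lt_le_trans (le_lt_trans be0 gap) _; apply: srt_nth => //; lia.
have m0 : #|I :\: J| != 0%N.
  apply: contra hIJ; rewrite cards_eq0 setD_eq0 => sIJ.
  by rewrite eqEcard sIJ hI card_I0 leqnn.
have hp' : be ^+ #|I :\: J| < al ^+ #|J :\: I| by rewrite -hm ltrXn2r.
rewrite eI eJ ltr_pM2l //; exact: le_lt_trans hD1 (lt_le_trans hp' hD0).
Qed.

Lemma vieta_le (R : realType) (L : fieldType) (v : L -> R) :
  nonarch_abs v -> forall (s : seq L) i,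
  sorted (fun x y => v y <= v x) s -> (0 < i < size s)%N ->
  v ((\prod_(x <- s) ('X - x%:P))`_(size s - i)) <= v (\prod_(x <- take i s) x).
Proof.
move=> hv s i hs hi0.
have hi : (i <= size s)%N by case/andP: hi0 => _ /ltnW.
rewrite coef_prod_XsubC ?leq_subr // subKn // (vM hv) (vexpN1 hv) mul1r.
rewrite -(prod_I0 hi) (vprod hv).
apply: vsum_le => //; last by apply: prodr_ge0 => a _; apply: v_ge0.
move=> I /andP[_ /eqP hI]; rewrite (vprod hv).
by case: (top_cmp hv hi hs hi0 hI).
Qed.

Lemma vieta_eq (R : realType) (L : fieldType) (v : L -> R) :
  nonarch_abs v -> forall (s : seq L) i,
  sorted (fun x y => v y <= v x) s -> (0 < i < size s)%N -> v s`_i < v s`_i.-1 ->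
  v ((\prod_(x <- s) ('X - x%:P))`_(size s - i)) = v (\prod_(x <- take i s) x).
Proof.
move=> hv s i hs hi0 gap.
have hi : (i <= size s)%N by case/andP: hi0 => _ /ltnW.
rewrite coef_prod_XsubC ?leq_subr // subKn // (vM hv) (vexpN1 hv) mul1r.
rewrite -(prod_I0 hi).
rewrite (bigD1 (I0 hi)) /=; last by rewrite card_I0 eqxx.
have pos : 0 < v (\prod_(a in I0 hi) s`_a).
  rewrite (vprod hv); apply: prodr_gt0 => a; rewrite mem_I0 => ha.
  apply: lt_le_trans (le_lt_trans (v_ge0 hv _) gap) _; apply: srt_nth => //.
    by case/andP: hi0 => h1 _; lia.
  by case/andP: hi0 => _ h2; lia.
apply: vD_lt => //; apply: vsum_lt => // I /andP[/eqP hI hIJ].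
rewrite !(vprod hv).
by case: (top_cmp hv hi hs hi0 hI) => _; apply.
Qed.

Lemma top_pos (R : realType) (L : fieldType) (v : L -> R) :
  nonarch_abs v -> forall (s : seq L) i,
  sorted (fun x y => v y <= v x) s -> (0 < i < size s)%N -> v s`_i < v s`_i.-1 ->
  0 < v (\prod_(x <- take i s) x).
Proof.
move=> hv s i hs hi0 gap.
have hi : (i <= size s)%N by case/andP: hi0 => _ /ltnW.
rewrite -(prod_I0 hi) (vprod hv); apply: prodr_gt0 => a; rewrite mem_I0 => ha.
apply: lt_le_trans (le_lt_trans (v_ge0 hv _) gap) _; apply: srt_nth => //.
  by case/andP: hi0 => h1 _; lia.
by case/andP: hi0 => _ h2; lia.
Qed.


Lemma mul_bound_r (R : realType) (L : fieldType) (v : L -> R) :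
  nonarch_abs v -> forall n (P Q : 'M[L]_n) (th : R), 0 <= th -> intg v P ->
  (forall a b, v (Q a b) <= th) -> forall a b, v ((P *m Q) a b) <= th.
Proof.
move=> hv n P Q th th0 hP hQ a b; rewrite mxE; apply: vsum_le => // c _.
by rewrite (vM hv); apply: le_trans (ler_pM _ _ (hP a c) (hQ c b)) _; rewrite ?(v_ge0 hv) ?mul1r.
Qed.

Lemma mul_bound_l (R : realType) (L : fieldType) (v : L -> R) :
  nonarch_abs v -> forall n (P Q : 'M[L]_n) (th : R), 0 <= th -> intg v Q ->
  (forall a b, v (P a b) <= th) -> forall a b, v ((P *m Q) a b) <= th.
Proof.
move=> hv n P Q th th0 hQ hP a b; rewrite mxE; apply: vsum_le => // c _.
by rewrite (vM hv); apply: le_trans (ler_pM _ _ (hP a c) (hQ c b)) _; rewrite ?(v_ge0 hv) ?mulr1.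
Qed.

Lemma inv_near1 (R : realType) (L : fieldType) (v : L -> R) :
  nonarch_abs v -> forall n (U : 'M[L]_n) (th : R), 0 <= th -> intg v U -> v (\det U) = 1 ->
  (forall a b, v ((U - 1%:M) a b) <= th) -> forall a b, v ((invmx U - 1%:M) a b) <= th.
Proof.
move=> hv n U th th0 hU hd hc a b.
have -> : invmx U - 1%:M = invmx U *m (- (U - 1%:M)).
  by rewrite mulmxN mulmxBr mulVmx ?(unit_of_v1 hv) // mulmx1 opprB.
apply: mul_bound_r => //; first exact: inv_intg.
by move=> c e; rewrite mxE (vN hv).
Qed.

Lemma size_eig (L : fieldType) n (A : 'M[L]_n) (s : seq L) :
  char_poly A = \prod_(x <- s) ('X - x%:P) -> size s = n.
Proof. by move=> h; move: (size_char_poly A); rewrite h size_prod_XsubC => -[]. Qed.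

Lemma intg_of_GL (R : realType) (L : fieldType) (v : L -> R) (F : {pred L}) n (U : 'M[L]_n) :
  in_GL_int v F U -> intg v U.
Proof. by case=> h _ a b; have := h a b; rewrite inE => /andP[_ ->]. Qed.

Lemma cong_lt1 (R : realType) (L : fieldType) (v : L -> R) (F : {pred L}) n (U : 'M[L]_n) :
  cong_id_mod_m v F U -> forall a b, v ((U - 1%:M) a b) < 1.
Proof. by move=> h a b; have := h a b; rewrite !mxE inE => /andP[_ ->]. Qed.

Unset Implicit Arguments.
Theorem proposition4p3 (R : realType) (L : closedFieldType) (v : L -> R)
  (F : {pred L}) (n : nat) (A U V : 'M[L]_n) (i : nat) (s t : seq L) :
  nonarch_abs v -> is_subfield F -> complete_for v F ->
  mx_over_pred F A ->
  (0 < i < n)%N ->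
  sorted_eigenvalues v A s ->
  v (nth 0 s i.-1) > v (nth 0 s i) ->
  sv_prod v A i = v (\prod_(x <- take i s) x) ->
  in_GL_int v F U -> in_GL_int v F V ->
  cong_id_mod_m v F U -> cong_id_mod_m v F V ->
  sorted_eigenvalues v (U *m A *m V) t ->
  v (\prod_(x <- take i t) x) = v (\prod_(x <- take i s) x).
Proof.
move=> hv _ _ _ hi [hAs hss] gap hS hU hV hUc hVc [hBt hts].
have sz_s := size_eig hAs; have sz_t := size_eig hBt.
have iU := intg_of_GL hU; have iV := intg_of_GL hV.
have dU : v (\det U) = 1 by case: hU.
have dV : v (\det V) = 1 by case: hV.
have uU := unit_of_v1 hv dU; have uV := unit_of_v1 hv dV.
pose th := \big[Num.max/0]_(p : 'I_n * 'I_n)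
             Num.max (v ((U - 1%:M) p.1 p.2)) (v ((V - 1%:M) p.1 p.2)).
have th0 : 0 <= th by apply: bigmax_ge0 => p; rewrite le_max v_ge0.
have th1 : th < 1.
  by apply: bigmax_lt => // p; rewrite gt_max !(cong_lt1 hUc, cong_lt1 hVc).
have thU : forall a b, v ((U - 1%:M) a b) <= th.
  move=> a b; apply: le_trans (le_bigmax _ (a, b)); by rewrite le_max lexx.
have thV : forall a b, v ((V - 1%:M) a b) <= th.
  move=> a b; apply: le_trans (le_bigmax _ (a, b)); by rewrite le_max lexx orbT.
have [W eW0] : {W | W = invmx U *m invmx V} by exists (invmx U *m invmx V).
have iUi := inv_intg hv iU dU; have iVi := inv_intg hv iV dV.
have iW : intg v W by rewrite eW0; apply: mul_intg.
have eW : W - 1%:M = (invmx U - 1%:M) *m invmx V + (invmx V - 1%:M).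
  by rewrite eW0 mulmxBl mul1mx addrA subrK.
have thW : forall a b, v (W a b - (1%:M : 'M[L]_n) a b) <= th.
  move=> a b.
  have -> : W a b - (1%:M : 'M[L]_n) a b = (W - 1%:M) a b by rewrite !mxE.
  rewrite eW mxE.
  apply: le_trans (vD hv _ _) _; rewrite ge_max.
  apply/andP; split; last exact: inv_near1.
  by apply: mul_bound_l => //; apply: inv_near1.
have hi' : (0 < i < size s)%N by rewrite sz_s.
have hit : (0 < i < size t)%N by rewrite sz_t.
have iln : (i <= n)%N by case/andP: hi => _ /ltnW.
set S := v (\prod_(x <- take i s) x).
have vB : v ((char_poly (U *m A *m V))`_(n - i)) = v ((\det (PM W A))`_(n - i)).
  by rewrite char_poly_UAV // -eW0 coefCM !(vM hv) dU dV !mul1r.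
have cA : v ((\det (PM 1%:M A))`_(n - i)) = S.
  by rewrite -char_poly_PM1 hAs -sz_s; apply: vieta_eq.
have Spos : 0 < S by apply: top_pos.
have hd := coef_PM_diff hv A th0 iW thW iln.
rewrite hS in hd.
have thS : th * S < S by rewrite -[X in _ < X]mul1r ltr_pM2r.
have cW : v ((\det (PM W A))`_(n - i)) = S.
  rewrite -(subrK ((\det (PM 1%:M A))`_(n - i)) ((\det (PM W A))`_(n - i))) addrC.
  by rewrite vD_lt // cA; apply: le_lt_trans hd thS.
have up1 : v ((char_poly (U *m A *m V))`_(n - i)) <= v (\prod_(x <- take i t) x).
  by rewrite hBt -sz_t; apply: vieta_le.
have up2 : v (\prod_(x <- take i t) x) <= sv_prod v (U *m A *m V) i.
  exact: peel hv _ _ _ _ hBt iln.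
have up3 : sv_prod v (U *m A *m V) i <= sv_prod v A i by apply: sv_mul_intg.
apply/le_anti/andP; split; first by rewrite /S -hS; exact: le_trans up2 up3.
by rewrite -cW -vB.
Qed.
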